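(* Assume the Standing setting below and let $x\in\Lambda$. Then: - if $\mu_+\lambda_+\eta^{-1}<1$, then $\omega(x)(v_t,v_s)=0$ for all $v_t\in T_x\Lambda$, $v_s\in E^s_x$; - if $\mu_-\lambda_-\eta<1$, then $\omega(x)(v_t,v_u)=0$ for all $v_t\in T_x\Lambda$, $v_u\in E^u_x$; - if $\lambda_+^2\eta^{-1}<1$, then $\omega(x)(v^1_s,v^2_s)=0$ for all $v^1_s,v^2_s\in E^s_x$; - if $\lambda_-^2\eta<1$, then $\omega(x)(v^1_u,v^2_u)=0$ for all $v^1_u,v^2_u\in E^u_x$.
   Context: Standing setting. A map, form or vector field is called $\mathcal C^r$ if it and its derivatives up to order $r$ are continuous and uniformly bounded; $r$ is a sufficiently large integer. $(M,\omega)$ is an orientable, connected, non-compact $d$-dimensional Riemannian manifold whose metric is $\mathcal C^r$ with uniformly bounded derivatives, and $\omega$ is a symplectic form (a closed non-degenerate 2-form). (U1): there is $\rho_0>0$ such that for every $x\in M$ the ball $B_{\rho_0}(x)$ carries a $\mathcal C^r$ coordinate chart onto the unit ball of $\mathbb R^d$, the charts and their inverses having uniformly bounded $\mathcal C^r$ norms. $f:M\to M$ is a diffeomorphism which is conformally symplectic: $f^*\omega=\eta\,\omega$ for a constant $\eta>0$. $\Lambda\subset M$ is an unbounded, boundaryless, connected, $f$-invariant submanifold which is a normally hyperbolic invariant manifold (NHIM): there is a $Df$-invariant splitting $T_xM=T_x\Lambda\oplus E^s_x\oplus E^u_x$ for $x\in\Lambda$, rates $0<\lambda_\pm<1$, $\mu_\pm\ge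 1$ with $\lambda_+\mu_-<1$, $\lambda_-\mu_+<1$, and constants $C_\pm,D_\pm>0$ such that for all $x\in\Lambda$: $v\in T_x\Lambda$ iff $\|Df^n(x)v\|\le D_+\mu_+^n\|v\|$ for all $n\ge 0$ and $\|Df^n(x)v\|\le D_-\mu_-^{|n|}\|v\|$ for all $n\le 0$; $v\in E^s_x$ iff $\|Df^n(x)v\|\le C_+\lambda_+^n\|v\|$ for all $n\ge0$; $v\in E^u_x$ iff $\|Df^n(x)v\|\le C_-\lambda_-^{|n|}\|v\|$ for all $n\le 0$. (U2): for some $\rho>0$ there is a $\mathcal C^r$ diffeomorphism with $\mathcal C^r$ inverse from a uniform neighborhood of the zero section of $E^s\oplus E^u$ onto $\mathcal O_\rho=\{y\in M: d(y,\Lambda)<\rho\}$. (U3): $f\in\mathcal C^r(\mathcal O_\rho)$, $f^{-1}\in\mathcal C^r(f(\mathcal O_\rho))$. Under these assumptions $\Lambda$ has local stable and unstable manifolds $W^{s,\rm loc}_\Lambda$, $W^{u,\rm loc}_\Lambda$ (points near $\Lambda$ whose forward, resp. backward, orbits stay near $\Lambda$; tangent at $\Lambda$ to $T\Lambda\oplus E^s$, resp. $T\Lambda\oplus E^u$), which are disjoint unions $W^{s,\rm loc}_\Lambda=\bigcup_{x\in\Lambda}W^{s,\rm loc}_x$, $W^{u,\rm loc}_\Lambda=\bigcup_{x\in\Lambda}W^{u,\rm loc}_x$ of strong stable/unstable fibers: $W^{s,\rm loc}_x$ is the set of nearby $y$ with $d(f^n(y),f^n(x))\le C\lambda_+^n$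 for all $n\ge0$ (a manifold tangent to $E^s_x$ at $x$), and analogously $W^{u,\rm loc}_x$ with $n\le 0$ and $\lambda_-$. It is assumed: (H1) $\Lambda$ is $\mathcal C^1$; (H2) $W^{s,\rm loc}_\Lambda$, $W^{u,\rm loc}_\Lambda$ are $\mathcal C^1$; (H3) the fibers $W^{s,\rm loc}_x$, $W^{u,\rm loc}_x$ are $\mathcal C^1$ uniformly in $x$; (H4) the foliations of $W^{s,\rm loc}_\Lambda$, $W^{u,\rm loc}_\Lambda$ by these fibers are of class $\mathcal C^{1,1}$ (leaves uniformly $\mathcal C^1$, depending $\mathcal C^1$ on the base point in the $\mathcal C^1$ topology). The wave maps $\Omega_+:W^{s,\rm loc}_\Lambda\to\Lambda$, $\Omega_-:W^{u,\rm loc}_\Lambda\to\Lambda$ send $y$ to the unique $x\in\Lambda$ with $y\in W^{s,\rm loc}_x$ (resp. $y\in W^{u,\rm loc}_x$); they satisfy $\Omega_\pm\circ f^n=f^n\circ\Omega_\pm$, which extends them to the global manifolds $W^s_\Lambda=\bigcup_{n\ge0}f^{-n}(W^{s,\rm loc}_\Lambda)$, $W^u_\Lambda=\bigcup_{n\ge0}f^{n}(W^{u,\rm loc}_\Lambda)$ (with global fibers $W^s_x$, $W^u_x$ defined analogously). A homoclinic channel is a submanifold $\Gamma\subset W^s_\Lambda\cap W^u_\Lambda$ (contained in finitely many iterates of the local manifolds) such that for all $x\in\Gamma$: $T_xM=T_xW^s_\Lambda+T_xW^u_\Lambda$, $T_xW^s_\Lambda\cap T_xW^u_\Lambda=T_x\Gamma$,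 $T_x\Gamma\oplus T_xW^s_{\Omega_+(x)}=T_xW^s_\Lambda$, $T_x\Gamma\oplus T_xW^u_{\Omega_-(x)}=T_xW^u_\Lambda$, and $\Omega_-|_\Gamma$ is a $\mathcal C^1$ diffeomorphism onto its image. Writing $\Omega^\Gamma_\pm=\Omega_\pm|_\Gamma$ (both $\mathcal C^1$ diffeomorphisms onto their images $H_\pm\subset\Lambda$), the scattering map is $S=\Omega_+^\Gamma\circ(\Omega_-^\Gamma)^{-1}:H_-\to H_+$. (U4): $f\in\mathcal C^r(\mathcal O)$ and $f^{-1}\in\mathcal C^r(f(\mathcal O))$, where $\mathcal O$ is the union of $\mathcal O_\rho$ with uniform neighborhoods of $W^{s,\rm loc}_\Lambda$ and $W^{u,\rm loc}_\Lambda$ (including the finitely many iterates containing $\Gamma$). (U5): $\sup_{x\in\mathcal O}\|\omega(x)\|<\infty$. For a submanifold $N$, $\omega|_N$ denotes the restriction of $\omega$ to $TN\times TN$. *)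

(* Defs.v *)
From mathcomp Require Import all_boot all_order all_algebra.
From mathcomp Require Import reals.
Set Implicit Arguments. Unset Strict Implicit. Unset Printing Implicit Defensive.
Import Order.TTheory GRing.Theory Num.Theory.
Local Open Scope ring_scope.

(* Pointwise linear-algebra model of the standing setting.
   Each tangent space T_yM is identified with row vectors 'rV[R]_d; a
   tangent vector v at y is pushed forward by Df(y) as v *m Df y. *)

Definition bform (R : realType) (d : nat) (A : 'M[R]_d) (u v : 'rV[R]_d) : R :=
  (u *m A *m v^T) 0 0.

Definition rnorm (R : realType) (d : nat) (G : 'M[R]_d) (v : 'rV[R]_d) : R :=
  Num.sqrt (bform G v v).

Fixpoint Dfpow (M : Type) (R : realType) (d : nat) (f : M -> M)
  (Df : M -> 'M[R]_d) (y : M) (n : nat) : 'M[R]_d :=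
  match n with
  | 0 => 1%:M
  | n'.+1 => Df y *m Dfpow f Df (f y) n'
  end.

(* Df^{-n}(y) = D(f^{-n})(y) = (Df^n(f^{-n} y))^{-1} : T_y M -> T_{f^{-n} y} M *)
Definition Dfneg (M : Type) (R : realType) (d : nat) (f finv : M -> M)
  (Df : M -> 'M[R]_d) (y : M) (n : nat) : 'M[R]_d :=
  invmx (Dfpow f Df (iter n finv y) n).

Definition standing_setting (M : Type) (R : realType) (d : nat)
  (g : M -> 'M[R]_d)
  (omega : M -> 'M[R]_d)
  (f finv : M -> M)
  (Df : M -> 'M[R]_d)
  (eta : R)
  (Lambda : M -> Prop)
  (TL Es Eu : M -> 'M[R]_d)    (* row spaces: T_x Lambda, E^s_x, E^u_x *)
  (lamp lamm mup mum Cp Cm Dp Dm : R)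
  (O : M -> Prop)
  : Prop :=
  [/\
   (forall y, (g y)^T = g y /\ forall v : 'rV[R]_d, v != 0 -> 0 < bform (g y) v v),
   (forall y, (omega y)^T = - omega y /\ omega y \in unitmx),
   (forall y, finv (f y) = y /\ f (finv y) = y) /\ (forall y, Df y \in unitmx),
   0 < eta /\ (forall y (u v : 'rV[R]_d),
      bform (omega (f y)) (u *m Df y) (v *m Df y) = eta * bform (omega y) u v) &
   (forall y, Lambda y <-> Lambda (f y))
  ] /\ [/\
   [/\ 0 < lamp < 1, 0 < lamm < 1, 1 <= mup & 1 <= mum] /\
     (lamp * mum < 1 /\ lamm * mup < 1) /\
     [/\ 0 < Cp, 0 < Cm, 0 < Dp & 0 < Dm],
   (forall y, Lambda y ->
      [/\ (TL y + Es y + Eu y :=: 1%:M)%MS,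
          (\rank (TL y) + \rank (Es y) + \rank (Eu y) = d)%N,
          (TL y *m Df y :=: TL (f y))%MS,
          (Es y *m Df y :=: Es (f y))%MS &
          (Eu y *m Df y :=: Eu (f y))%MS]),
   (forall y, Lambda y -> forall v : 'rV[R]_d,
      [/\ (v <= TL y)%MS <->
            ((forall n : nat, rnorm (g (iter n f y)) (v *m Dfpow f Df y n)
                              <= Dp * mup ^+ n * rnorm (g y) v) /\
             (forall n : nat, rnorm (g (iter n finv y)) (v *m Dfneg f finv Df y n)
                              <= Dm * mum ^+ n * rnorm (g y) v)),
          (v <= Es y)%MS <->
            (forall n : nat, rnorm (g (iter n f y)) (v *m Dfpow f Df y n)
                              <= Cp * lamp ^+ n * rnorm (g y) v) &
          (v <= Eu y)%MS <->
            (forall n : nat, rnorm (g (iter n finv y)) (v *m Dfneg f finv Df y n)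
                              <= Cm * lamm ^+ n * rnorm (g y) v)]) &
   (forall y, Lambda y -> O y) /\
   (exists K : R, forall y, O y -> forall u v : 'rV[R]_d,
      `|bform (omega y) u v| <= K * rnorm (g y) u * rnorm (g y) v)
  ].

(* Main.v *)
Require Import Defs.
From mathcomp Require Import all_boot all_order all_algebra.
From mathcomp Require Import reals.
From mathcomp Require Import ring lra.
Import Order.TTheory GRing.Theory Num.Theory.
Local Open Scope ring_scope.

Lemma geom_aux (R : realType) (q : R) (n : nat) : 0 <= q -> q < 1 ->
  q ^+ n * (1 + n%:R * (1 - q)) <= 1.
Proof.
move=> q0 q1; elim: n => [|n IH]; first by rewrite expr0 mul0r addr0 mul1r.
have hq : q ^+ n.+1 <= 1 by rewrite exprn_ile1 // ltW.
have hq0 : 0 <= q ^+ n.+1 by apply: exprn_ge0.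
rewrite exprS -natr1.
have e : q * q ^+ n * (1 + (n%:R + 1) * (1 - q)) =
   q * (q ^+ n * (1 + n%:R * (1 - q))) + q * q ^+ n * (1 - q) by ring.
rewrite e -exprS.
have : q * (q ^+ n * (1 + n%:R * (1 - q))) <= q by rewrite ler_piMr.
nra.
Qed.

Lemma zero_of_geom (R : realType) (a C q : R) : 0 <= q -> q < 1 ->
  (forall n, `|a| <= C * q ^+ n) -> a = 0.
Proof.
move=> q0 q1 H; apply/eqP; apply/negPn/negP => a0.
have pa : 0 < `|a| by rewrite normr_gt0.
have C0 : 0 < C by have := H 0%N; rewrite expr0 mulr1; lra.
set x := C / ((1 - q) * `|a|).
have x0 : 0 <= x by rewrite /x divr_ge0 // ?ltW // mulr_gt0 // subr_gt0.
have := archi_boundP x0; set m := Num.bound x => hm.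
have h1 := (@geom_aux _ q m q0 q1).
have h2 := H m.
have hqm : 0 <= q ^+ m by apply: exprn_ge0.
have hm0 : 0 <= m%:R :> R by [].
have : `|a| * (1 + m%:R * (1 - q)) <= C.
  apply: (le_trans (y := C * q ^+ m * (1 + m%:R * (1 - q)))).
    apply: ler_wpM2r => //; nra.
  rewrite -mulrA; rewrite ler_piMr //; lra.
have : C < m%:R * ((1 - q) * `|a|).
  by rewrite -ltr_pdivrMr ?mulr_gt0 ?subr_gt0.
nra.
Qed.

Section Main.
Variables (M : Type) (R : realType) (d : nat) (omega : M -> 'M[R]_d)
  (f finv : M -> M) (Df : M -> 'M[R]_d) (eta : R).
Hypothesis Hconf : forall y (u v : 'rV[R]_d),
      bform (omega (f y)) (u *m Df y) (v *m Df y) = eta * bform (omega y) u v.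

Lemma push_fwd n : forall y u v,
  bform (omega (iter n f y)) (u *m Dfpow f Df y n) (v *m Dfpow f Df y n)
  = eta ^+ n * bform (omega y) u v.
Proof.
elim: n => [|n IH] y u v /=; first by rewrite !mulmx1 expr0 mul1r.
by rewrite -[f (iter n f y)]/(iter n.+1 f y) iterSr !mulmxA IH Hconf exprSr mulrA.
Qed.

Lemma Dfpow_unit : (forall y, Df y \in unitmx) -> forall n y, Dfpow f Df y n \in unitmx.
Proof.
move=> HU; elim=> [|n IH] y /=; first exact: unitmx1.
by rewrite unitmx_mul HU IH.
Qed.

Lemma iter_back : (forall y, f (finv y) = y) -> forall n y, iter n f (iter n finv y) = y.
Proof.
move=> Hb; elim=> [|n IH] y //=.
by rewrite -[f (iter n f _)]/(iter n.+1 f _) iterSr Hb IH.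
Qed.

Lemma push_bwd (HU : forall y, Df y \in unitmx) (Hb : forall y, f (finv y) = y) n y u v :
  bform (omega y) u v = eta ^+ n *
   bform (omega (iter n finv y)) (u *m Dfneg f finv Df y n) (v *m Dfneg f finv Df y n).
Proof.
rewrite /Dfneg -push_fwd iter_back //.
by rewrite !mulmxKV // Dfpow_unit.
Qed.
End Main.

Lemma bound3 (R : realType) (B K ru rv al be : R) :
  B <= K * ru * rv -> 0 <= ru -> 0 <= rv -> ru <= al -> rv <= be ->
  B <= Num.max K 0 * al * be.
Proof.
move=> h r1 r2 h1 h2.
have k0 : 0 <= Num.max K 0 by rewrite le_max lexx orbT.
have kk : K <= Num.max K 0 by rewrite le_max lexx.
have : K * ru * rv <= Num.max K 0 * ru * rv.
  by rewrite -!mulrA ler_wpM2r // mulr_ge0.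
have : Num.max K 0 * ru * rv <= Num.max K 0 * al * be.
  rewrite -!mulrA ler_wpM2l // ler_pM //.
nra.
Qed.
Lemma fin_fwd (R : realType) (b E X C : R) : 0 < E -> E * `|b| <= C * X -> `|b| <= C * (X / E).
Proof. by move=> E0 h; rewrite mulrA ler_pdivlMr // mulrC. Qed.

Theorem lemma6p4 (M : Type) (R : realType) (d : nat)
  (g omega : M -> 'M[R]_d) (f finv : M -> M) (Df : M -> 'M[R]_d) (eta : R)
  (Lambda : M -> Prop) (TL Es Eu : M -> 'M[R]_d)
  (lamp lamm mup mum Cp Cm Dp Dm : R) (O : M -> Prop) :
  standing_setting g omega f finv Df eta Lambda TL Es Eu
    lamp lamm mup mum Cp Cm Dp Dm O ->
  forall x : M, Lambda x ->
  [/\ (mup * lamp / eta < 1 ->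
         forall vt vs : 'rV[R]_d, (vt <= TL x)%MS -> (vs <= Es x)%MS ->
           bform (omega x) vt vs = 0),
      (mum * lamm * eta < 1 ->
         forall vt vu : 'rV[R]_d, (vt <= TL x)%MS -> (vu <= Eu x)%MS ->
           bform (omega x) vt vu = 0),
      (lamp ^+ 2 / eta < 1 ->
         forall v1 v2 : 'rV[R]_d, (v1 <= Es x)%MS -> (v2 <= Es x)%MS ->
           bform (omega x) v1 v2 = 0) &
      (lamm ^+ 2 * eta < 1 ->
         forall v1 v2 : 'rV[R]_d, (v1 <= Eu x)%MS -> (v2 <= Eu x)%MS ->
           bform (omega x) v1 v2 = 0)].
Proof.
rewrite /standing_setting.
move=> [HA HB] x Lx.
case: HA => Hg Hom [Hfi HU] [Heta Hconf] HL.
case: HB => Hrates Hsplit Hchar [HO [K HK]].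
case: Hrates => [[lp lm mp mm] [_ [cp cm dp dm]]].
have Hb : forall y, f (finv y) = y by move=> y; case: (Hfi y).
have LF : forall n, Lambda (iter n f x).
  by elim=> [|n IH] //=; apply: (proj1 (HL _)).
have LB : forall n, Lambda (iter n finv x).
  by elim=> [|n IH] //=; apply: (proj2 (HL _)); rewrite Hb.
have rn0 : forall y v, 0 <= rnorm (g y) v by move=> y v; exact: sqrtr_ge0.
set K' := Num.max K 0.
have k0 : 0 <= K' by rewrite le_max lexx orbT.
have e0 : forall n, 0 < eta ^+ n by move=> n; exact: exprn_gt0.
move: lp lm => /andP[lp0 lp1] /andP[lm0 lm1].
split.
- move=> hq vt vs ht hs.
  have [hT hS _] := Hchar x Lx vt.
  have [_ hS' _] := Hchar x Lx vs.
  apply: (@zero_of_geom _ _ (K' * (Dp * rnorm (g x) vt) * (Cp * rnorm (g x) vs))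
     (mup * lamp / eta)); first by apply: divr_ge0; [apply: mulr_ge0|]; lra.
    exact: hq.
  move=> n; rewrite expr_div_n exprMn; apply: fin_fwd => //.
  have h := HK _ (HO _ (LF n)) (vt *m Dfpow f Df x n) (vs *m Dfpow f Df x n).
  rewrite (@push_fwd _ _ _ _ _ _ _ Hconf) normrM gtr0_norm // in h.
  have := (@bound3 _ _ _ _ _ _ _ h) (rn0 _ _) (rn0 _ _) ((hT.1 ht).1 n) ((hS'.1 hs) n).
  move=> h2; apply: (le_trans h2); rewrite le_eqVlt; apply/orP; left; apply/eqP; rewrite /K'; ring.
- move=> hq vt vu ht hu.
  have [hT _ _] := Hchar x Lx vt.
  have [_ _ hU] := Hchar x Lx vu.
  apply: (@zero_of_geom _ _ (K' * (Dm * rnorm (g x) vt) * (Cm * rnorm (g x) vu))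
     (mum * lamm * eta)); first by apply: mulr_ge0; [apply: mulr_ge0|]; lra.
    exact: hq.
  move=> n; rewrite (@push_bwd _ _ _ _ _ _ _ _ Hconf HU Hb n) normrM gtr0_norm //.
  have h := HK _ (HO _ (LB n)) (vt *m Dfneg f finv Df x n) (vu *m Dfneg f finv Df x n).
  have := (@bound3 _ _ _ _ _ _ _ h) (rn0 _ _) (rn0 _ _) ((hT.1 ht).2 n) ((hU.1 hu) n).
  move=> h2.
  rewrite !exprMn.
  have := ler_wpM2l (ltW (e0 n)) h2.
  move=> h3; apply: (le_trans h3); rewrite le_eqVlt; apply/orP; left; apply/eqP; rewrite /K'; ring.
- move=> hq v1 v2 h1 h2.
  have [_ hS1 _] := Hchar x Lx v1.
  have [_ hS2 _] := Hchar x Lx v2.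
  apply: (@zero_of_geom _ _ (K' * (Cp * rnorm (g x) v1) * (Cp * rnorm (g x) v2))
     (lamp ^+ 2 / eta)); first by apply: divr_ge0; [apply: exprn_ge0|]; lra.
    exact: hq.
  move=> n; rewrite expr_div_n expr2 exprMn; apply: fin_fwd => //.
  have h := HK _ (HO _ (LF n)) (v1 *m Dfpow f Df x n) (v2 *m Dfpow f Df x n).
  rewrite (@push_fwd _ _ _ _ _ _ _ Hconf) normrM gtr0_norm // in h.
  have := (@bound3 _ _ _ _ _ _ _ h) (rn0 _ _) (rn0 _ _) ((hS1.1 h1) n) ((hS2.1 h2) n).
  move=> h3; apply: (le_trans h3); rewrite le_eqVlt; apply/orP; left; apply/eqP; rewrite /K'; ring.
- move=> hq v1 v2 h1 h2.
  have [_ _ hU1] := Hchar x Lx v1.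
  have [_ _ hU2] := Hchar x Lx v2.
  apply: (@zero_of_geom _ _ (K' * (Cm * rnorm (g x) v1) * (Cm * rnorm (g x) v2))
     (lamm ^+ 2 * eta)); first by apply: mulr_ge0; [apply: exprn_ge0|]; lra.
    exact: hq.
  move=> n; rewrite (@push_bwd _ _ _ _ _ _ _ _ Hconf HU Hb n) normrM gtr0_norm //.
  have h := HK _ (HO _ (LB n)) (v1 *m Dfneg f finv Df x n) (v2 *m Dfneg f finv Df x n).
  have := (@bound3 _ _ _ _ _ _ _ h) (rn0 _ _) (rn0 _ _) ((hU1.1 h1) n) ((hU2.1 h2) n).
  move=> h3.
  rewrite exprMn expr2 exprMn.
  have := ler_wpM2l (ltW (e0 n)) h3.
  move=> h4; apply: (le_trans h4); rewrite le_eqVlt; apply/orP; left; apply/eqP; rewrite /K'; ring.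
Qed.
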